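(* Let $R$ be a Bézout domain and let $A,B,C\in R^{n\times n}$ satisfy $ABA=ACA$. If $R_r(AB)=R_r(ABA)$ and $R_r(CA)=R_r(CAB)$, then $AB$ is similar to $CA$.
   Context: A Bézout domain is an integral domain in which every finitely generated ideal is principal. For $M\in R^{m\times n}$, $R_r(M)=\{Mx : x\in R^{n\times 1}\}\subseteq R^{m\times 1}$ is the column space of $M$. Two matrices $M,N\in R^{n\times n}$ are similar if $M=S^{-1}NS$ for some invertible $S\in R^{n\times n}$. *)

(* Defs.v *)
From HB Require Import structures.
From mathcomp Require Import all_boot all_order all_algebra.
Set Implicit Arguments. Unset Strict Implicit. Unset Printing Implicit Defensive.
Import GRing.Theory.
Local Open Scope ring_scope.

Definition in_fg_ideal (R : comNzRingType) (s : seq R) (x : R) : Prop :=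
  exists c : seq R, size c = size s /\ x = \sum_(i < size s) c`_i * s`_i.

Definition in_principal_ideal (R : comNzRingType) (d x : R) : Prop :=
  exists r : R, x = r * d.

Definition bezout_domain (R : idomainType) : Prop :=
  forall s : seq R, exists d : R,
    forall x : R, in_fg_ideal s x <-> in_principal_ideal d x.

Definition colspace (R : comNzRingType) (m n : nat) (M : 'M[R]_(m, n))
  (v : 'cV[R]_m) : Prop := exists x : 'cV[R]_n, v = M *m x.

Definition same_colspace (R : comNzRingType) (m n p : nat)
  (M : 'M[R]_(m, n)) (N : 'M[R]_(m, p)) : Prop :=
  forall v : 'cV[R]_m, colspace M v <-> colspace N v.

Definition similar_mx (R : comUnitRingType) (n : nat) (M N : 'M[R]_n) : Prop :=
  exists S : 'M[R]_n, S \in unitmx /\ M = invmx S *m N *m S.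

(* Main.v *)
Require Import Defs.
From mathcomp Require Import all_boot all_order all_algebra fraction zify.
Set Implicit Arguments. Unset Strict Implicit. Unset Printing Implicit Defensive.
Import GRing.Theory.
Local Open Scope ring_scope.

Ltac mkpre h := let q := fresh "q" in let X := fresh "X" in
  move=> q X; rewrite -!mulmxA; congr (X *m _); rewrite ?mulmxA; exact h.

Lemma cancel_scale (R : idomainType) m n (c : R) (X Y : 'M[R]_(m,n)) :
  c != 0 -> c *: X = c *: Y -> X = Y.
Proof.
move=> cnz h; apply/matrixP => i j.
have := congr1 (fun M : 'M[R]_(m,n) => M i j) h; rewrite !mxE; exact: mulfI.
Qed.

Lemma ch_trick (R : idomainType) n (P Z : 'M[R]_n.+1) : P = P *m P *m Z ->
  exists c s, c != 0 /\ c *: P = s *m P *m P.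
Proof.
move=> hP.
have [m /= [q nzq Hchi]] := multiplicity_XsubC (char_poly P) 0.
have chnz : char_poly P != 0 by apply: monic_neq0; apply: char_poly_monic.
rewrite chnz /= in nzq.
have CH := Cayley_Hamilton P.
rewrite Hchi subr0 rmorphM rmorphXn /= horner_mx_X in CH.
have Hpow : forall k, P = P ^+ k.+1 *m Z ^+ k.
  elim=> [|k IH]; first by rewrite expr1 expr0 mulmx1.
  rewrite {1}hP {2}IH !mulmxE.
  by rewrite !mulrA -exprS -mulrA -exprSr.
have hqP : horner_mx P q *m P = 0.
  rewrite {2}(Hpow m) exprSr !mulmxE !mulrA CH.
  by rewrite !mul0r.
have hr : root (q - (q`_0)%:P) 0.
  by rewrite /root hornerD hornerN hornerC horner_coef0 subrr.
have [q2 Hq2] := (elimT (factor_theorem _ _) hr).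
have Hq : q = q2 * 'X + (q`_0)%:P by apply/eqP; rewrite -subr_eq Hq2 polyC0 subr0.
set c := q`_0 in Hq *.
exists c, (- horner_mx P q2); split.
  by move: nzq; rewrite /root horner_coef0.
move: hqP; rewrite Hq rmorphD rmorphM /= horner_mx_X horner_mx_C.
rewrite mulmxDl mul_scalar_mx => /eqP; rewrite addr_eq0 => /eqP hh.
rewrite !mulNmx; have -> : horner_mx P q2 *m P *m P = horner_mx P q2 * P *m P by [].
by rewrite hh opprK.

Qed.


Lemma group_inv (R : idomainType) n (P Z : 'M[R]_n.+1) : P = P *m P *m Z ->
  exists g, P *m g = g *m P /\ g *m P *m g = g /\ P *m g *m P = P.
Proof.
move=> hP; have [c [s [cnz hc]]] := ch_trick hP.
have hPPZ : P *m P *m Z = P by rewrite -hP.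
have hPPZ' : forall q (X : 'M_(q, n.+1)), X *m P *m P *m Z = X *m P by mkpre hPPZ.
have h1 : P *m Z *m P = P.
  apply: (cancel_scale cnz); rewrite !scalemxAl hc.
  by rewrite hPPZ'.
have h1' : forall q (X : 'M_(q, n.+1)), X *m P *m Z *m P = X *m P by mkpre h1.
have h2 : P *m Z *m Z *m P = P *m Z.
  apply: (cancel_scale cnz); rewrite !scalemxAl hc.
  by rewrite !hPPZ' h1'.
have h2' : forall q (X : 'M_(q, n.+1)), X *m P *m Z *m Z *m P = X *m P *m Z by mkpre h2.
exists (P *m Z *m Z *m P *m Z).
have e1 : P *m (P *m Z *m Z *m P *m Z) = P *m Z.
  by rewrite !mulmxA hPPZ h1.
have e2 : P *m Z *m Z *m P *m Z *m P = P *m Z.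
  by rewrite h1' h2.
split; first by rewrite e1 e2.
split; first by rewrite e2 !mulmxA h1.
by rewrite e1 h1.
Qed.


Lemma dim_le (R : idomainType) n k (K : 'M[R]_(n,k)) (G : 'M[R]_(k,n)) :
  G *m K = 1%:M -> (k <= n)%N.
Proof.
move=> h.
have := mxrankM_maxr (map_mx (@FracField.tofrac R) G) (map_mx (@FracField.tofrac R) K).
rewrite -map_mxM h map_mx1 mxrank1 => /leq_trans; apply; exact: rank_leq_row.
Qed.

Lemma fg_ord (R : idomainType) n (f : 'I_n -> R) x :
  in_fg_ideal [seq f i | i <- enum 'I_n] x <-> exists w : 'I_n -> R, x = \sum_i w i * f i.
Proof.
set s := [seq f i | i <- enum 'I_n].
have hs : size s = n by rewrite size_map size_enum_ord.
have conv : forall (F : nat -> R), \sum_(i < size s) F i = \sum_(i < n) F i.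
  by move=> F; rewrite -(big_mkord (fun _ => true) F) hs big_mkord.
have hnth : forall i : 'I_n, s`_i = f i.
  by move=> i; rewrite /s (nth_map i) ?size_enum_ord // nth_ord_enum.
split.
- case=> cs [hc ->]; exists (fun i => cs`_i).
  rewrite (conv (fun i => cs`_i * s`_i)); apply: eq_bigr => i _; by rewrite hnth.
- case=> w ->; exists [seq w i | i <- enum 'I_n]; split; first by rewrite !size_map.
  rewrite (conv (fun i => [seq w i | i <- enum 'I_n]`_i * s`_i)); apply: eq_bigr => i _.
  by rewrite hnth (nth_map i) ?size_enum_ord // nth_ord_enum.
Qed.

Lemma peel (R : idomainType) (hR : bezout_domain R) n (E : 'M[R]_n) :
  E *m E = E -> E != 0 ->
  exists (u : 'cV[R]_n) (phi : 'rV[R]_n),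
    E *m u = u /\ phi *m E = phi /\ phi *m u = 1%:M.
Proof.
move=> hE /eqP nz.
have [i [j Eij]] : exists i j, E i j != 0.
  case: (pickP (fun ij : 'I_n * 'I_n => E ij.1 ij.2 != 0)) => [[i j] /= h|h].
    by exists i, j.
  exfalso; apply: nz; apply/matrixP => i j; have := h (i, j).
  by rewrite /= => /negbFE /eqP ->; rewrite mxE.
pose f k := E k j.
have [d hd] := hR [seq f k | k <- enum 'I_n].
have hin : forall k, exists r, f k == r * d.
  move=> k0; have [r hr] : in_principal_ideal d (f k0).
    apply/hd/fg_ord; exists (fun k => (k == k0)%:R).
    rewrite (bigD1 k0) //= eqxx mul1r big1 ?addr0 // => k /negPf ->.
    by rewrite mul0r.
  by exists r; rewrite hr.
pose u : 'cV[R]_n := \col_k xchoose (hin k).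
have hu : forall k, f k = u k 0 * d.
  by move=> k; rewrite mxE; apply/eqP/(xchooseP (hin k)).
clearbody u.
have dnz : d != 0.
  by apply: contraNneq Eij => d0; rewrite -/(f i) hu d0 mulr0.
have [w hw] : exists w : 'I_n -> R, d = \sum_k w k * f k.
  by apply/fg_ord/hd; exists 1; rewrite mul1r.
have hsum : \sum_k w k * u k 0 = 1.
  apply: (mulIf dnz); rewrite mulr_suml mul1r [in RHS]hw.
  by apply: eq_bigr => k _; rewrite hu mulrA.
have Eu : E *m u = u.
  apply: (cancel_scale dnz); rewrite scalemxAr.
  have -> : d *: u = col j E.
    by apply/matrixP => a b; rewrite !mxE (ord1 b) -/(f a) hu mulrC.
  by rewrite colE mulmxA hE.
exists u, (\row_k w k *m E); split => //; split; first by rewrite -mulmxA hE.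
rewrite -mulmxA Eu; apply/matrixP => a b; rewrite (ord1 a) (ord1 b) !mxE -hsum.
by apply: eq_bigr => k _; rewrite mxE.
Qed.

Lemma split_idem (R : idomainType) (hR : bezout_domain R) n (E : 'M[R]_n) :
  E *m E = E ->
  exists r (K : 'M[R]_(n, r)) (G : 'M[R]_(r, n)), K *m G = E /\ G *m K = 1%:M.
Proof.
move=> hE.
have main : forall j, (exists r (K : 'M[R]_(n, r)) (G : 'M[R]_(r, n)),
      K *m G = E /\ G *m K = 1%:M) \/
    exists k (K : 'M[R]_(n, k)) (G : 'M[R]_(k, n)) (E' : 'M[R]_n),
      [/\ (j <= k)%N, G *m K = 1%:M, E = K *m G + E', E' *m E' = E'
        & E' *m K = 0 /\ G *m E' = 0].
  elim=> [|j IH].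
    right; exists 0%N, 0, 0, E; split => //.
    - by rewrite [LHS]flatmx0 [RHS]flatmx0.
    - by rewrite mul0mx add0r.
    - by rewrite mulmx0 mul0mx.
  case: IH => [hl | [k [K [G [E' [hj hGK hEd hE' [hE'K hGE']]]]]]]; first by left.
  have [hz | nz] := eqVneq E' 0.
    by left; exists k, K, G; rewrite hEd hz addr0.
  have [u [phi [hu [hphi hpu]]]] := peel hR hE' nz.
  have phiK : phi *m K = 0 by rewrite -hphi -mulmxA hE'K mulmx0.
  have Gu : G *m u = 0 by rewrite -hu mulmxA hGE' mul0mx.
  right; exists (k + 1)%N, (row_mx K u), (col_mx G phi), (E' - u *m phi).
  split.
  - by rewrite addn1 ltnS.
  - by rewrite mul_col_row hGK hpu phiK Gu -scalar_mx_block.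
  - by rewrite mul_row_col hEd -addrA [u *m phi + _]addrC subrK.
  - rewrite mulmxBl !mulmxBr hE' mulmxA hu -mulmxA hphi mulmxA.
    rewrite -(mulmxA u phi u) hpu mulmx1 subrr subr0 //.
  - split.
    + by rewrite mul_mx_row !mulmxBl hE'K -mulmxA phiK hu -mulmxA hpu mulmx1 mulmx0 !subrr row_mx0.
    + by rewrite mul_col_mx !mulmxBr hGE' mulmxA Gu mul0mx hphi mulmxA hpu mul1mx !subrr col_mx0.
have [//|[k [K [G [_ [hj hGK _ _ _]]]]]] := main n.+1.
by have := leq_trans hj (dim_le hGK); rewrite ltnn.
Qed.


Lemma dim_sum (R : idomainType) n (E : 'M[R]_n) r a (K : 'M_(n, r)) (G : 'M_(r, n))
  (L : 'M_(n, a)) (H : 'M_(a, n)) : E *m E = E -> K *m G = E -> G *m K = 1%:M ->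
  L *m H = 1%:M - E -> H *m L = 1%:M -> (r + a)%N = n.
Proof.
move=> EE KG GK LH HL.
have GL : G *m L = 0.
  have e : G *m L = G *m K *m G *m (L *m H) *m L by rewrite GK mul1mx -!mulmxA HL mulmx1.
  by rewrite e -(mulmxA G K G) KG LH -(mulmxA G) mulmxBr mulmx1 EE subrr mulmx0 mul0mx.
have HK : H *m K = 0.
  have e : H *m K = H *m L *m H *m (K *m G) *m K by rewrite HL mul1mx -!mulmxA GK mulmx1.
  by rewrite e -(mulmxA H L H) LH KG -(mulmxA H) mulmxBl mul1mx EE subrr mulmx0 mul0mx.
apply/eqP; rewrite eqn_leq; apply/andP; split.
  apply: (@dim_le _ _ _ (row_mx K L) (col_mx G H)).
  by rewrite mul_col_row GK GL HK HL -scalar_mx_block.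
apply: (@dim_le _ _ _ (col_mx G H) (row_mx K L)).
by rewrite mul_row_col KG LH addrC subrK.
Qed.

Lemma core (R : idomainType) (hR : bezout_domain R) n (A V P Q g k : 'M[R]_n) :
  P *m A = A *m Q -> A *m V = P *m P -> Q *m V = V *m P -> V *m A = Q *m Q ->
  Q *m k *m V = V ->
  P *m g = g *m P -> g *m P *m g = g -> P *m g *m P = P ->
  Q *m k = k *m Q -> k *m Q *m k = k -> Q *m k *m Q = Q ->
  exists S, S \in unitmx /\ P = invmx S *m Q *m S.
Proof.
move=> PA AV QV VA FV Pg gPg PgP Qk kQk QkQ.
have PA' : forall q (X : 'M_(q, n)), X *m P *m A = X *m A *m Q by mkpre PA.
have AV' : forall q (X : 'M_(q, n)), X *m A *m V = X *m P *m P by mkpre AV.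
have QV' : forall q (X : 'M_(q, n)), X *m Q *m V = X *m V *m P by mkpre QV.
have VA' : forall q (X : 'M_(q, n)), X *m V *m A = X *m Q *m Q by mkpre VA.
have FV' : forall q (X : 'M_(q, n)), X *m Q *m k *m V = X *m V by mkpre FV.
have Pg' : forall q (X : 'M_(q, n)), X *m P *m g = X *m g *m P by mkpre Pg.
have gPg' : forall q (X : 'M_(q, n)), X *m g *m P *m g = X *m g by mkpre gPg.
have PgP' : forall q (X : 'M_(q, n)), X *m P *m g *m P = X *m P by mkpre PgP.
have Qk' : forall q (X : 'M_(q, n)), X *m Q *m k = X *m k *m Q by mkpre Qk.
have kQk' : forall q (X : 'M_(q, n)), X *m k *m Q *m k = X *m k by mkpre kQk.
have QkQ' : forall q (X : 'M_(q, n)), X *m Q *m k *m Q = X *m Q by mkpre QkQ.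
have ggP : g *m g *m P = g by rewrite -Pg' gPg.
have ggP' : forall q (X : 'M_(q, n)), X *m g *m g *m P = X *m g by mkpre ggP.
have QQk : Q *m Q *m k = Q by rewrite Qk' QkQ.
have QQk' : forall q (X : 'M_(q, n)), X *m Q *m Q *m k = X *m Q by mkpre QQk.
have EE : P *m g *m (P *m g) = P *m g by rewrite mulmxA PgP.
have Ak1 : A *m k = P *m A *m k *m k.
  by rewrite PA -(kQk' _ A) -Qk' -mulmxA -[k *m k]/(k *m k) !mulmxA.
have EAk : P *m g *m A *m k = A *m k.
  by rewrite [RHS]Ak1 -mulmxA Ak1 !mulmxA PgP.
have gA : g *m A = A *m k.
  rewrite -{1}ggP PA' -(QQk' _ (g *m g *m A)) -PA' -PA' ggP -Pg.
  exact: EAk.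
pose M := V *m g *m g.
have AM : A *m M = P *m g.
  by rewrite /M !mulmxA AV Pg' PgP.
have QM : Q *m M = M *m P.
  by rewrite /M !mulmxA QV Pg' Pg'.
have MA : M *m A = Q *m k.
  rewrite /M -mulmxA gA mulmxA -(mulmxA V g A) gA !mulmxA VA QQk //.
have MA' : forall q (X : 'M_(q, n)), X *m V *m g *m g *m A = X *m Q *m k by mkpre MA.
have AF : A *m (Q *m k) = P *m g *m A *m (Q *m k).
  by rewrite !mulmxA -PA' PgP -PA.
have FF : Q *m k *m (Q *m k) = Q *m k by rewrite mulmxA QkQ.
have idc : forall (E : 'M[R]_n), E *m E = E -> (1%:M - E) *m (1%:M - E) = 1%:M - E.
  by move=> E hE; rewrite mulmxBl !mulmxBr !mul1mx mulmx1 hE subrr subr0.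
have [r [K [G [KG GK]]]] := split_idem hR EE.
have [r' [K' [G' [KG' GK']]]] := split_idem hR FF.
have [a [L [H [LH HL]]]] := split_idem hR (idc _ EE).
have [b [L' [H' [LH' HL']]]] := split_idem hR (idc _ FF).
have le1 : (r <= r')%N.
  apply: (@dim_le _ _ _ (G' *m M *m K) (G *m A *m K')).
  rewrite !mulmxA -[G *m A *m K' *m G']mulmxA KG' /M !mulmxA FV' AV' Pg' PgP'.
  by rewrite -[G *m P *m g]mulmxA -KG !mulmxA GK mul1mx GK.
have le2 : (r' <= r)%N.
  apply: (@dim_le _ _ _ (G *m A *m K') (G' *m M *m K)).
  rewrite !mulmxA -[G' *m V *m g *m g *m K *m G]mulmxA KG !mulmxA ggP' MA'.
  by rewrite -[G' *m Q *m k]mulmxA -KG' !mulmxA GK' mul1mx GK'.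
have d1 := dim_sum EE KG GK LH HL.
have d2 := dim_sum FF KG' GK' LH' HL'.
have eab : a = b by lia.
subst b.
have FL' : Q *m k *m L' = 0.
  have e : L' = L' *m H' *m L' by rewrite -mulmxA HL' mulmx1.
  by rewrite e mulmxA LH' mulmxBr mulmx1 FF subrr mul0mx.
have H'V : H' *m V = 0.
  have e : H' = H' *m L' *m H' by rewrite HL' mul1mx.
  by rewrite e -(mulmxA H' L' H') LH' -mulmxA mulmxBl mul1mx FV subrr mulmx0.
have QL' : Q *m L' = 0.
  by have := congr1 (mulmx Q) FL'; rewrite mulmx0 !mulmxA QQk.
have HP : H *m P = 0.
  have e : H = H *m L *m H by rewrite HL mul1mx.
  by rewrite e -(mulmxA H L H) LH -mulmxA mulmxBl mul1mx PgP subrr mulmx0.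
pose S := M *m (P *m g) + L' *m H.
pose S' := A *m (Q *m k) + L *m H'.
have hS : S' *m S = 1%:M.
  rewrite /S /S' mulmxDl !mulmxDr.
  have t1 : A *m (Q *m k) *m (M *m (P *m g)) = P *m g.
    by rewrite /M !mulmxA (FV' _ A) AV (Pg' _ P) !PgP.
  have t2 : A *m (Q *m k) *m (L' *m H) = 0.
    by rewrite mulmxA -(mulmxA A) FL' mulmx0 mul0mx.
  have t3 : L *m H' *m (M *m (P *m g)) = 0.
    by rewrite /M !mulmxA -[L *m H' *m V]mulmxA H'V mulmx0 !mul0mx.
  have t4 : L *m H' *m (L' *m H) = L *m H.
    by rewrite !mulmxA -[L *m H' *m L']mulmxA HL' mulmx1.
  by rewrite t1 t2 t3 t4 LH addr0 add0r addrC subrK.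
have hQS : Q *m S = S *m P.
  rewrite /S mulmxDr mulmxDl (mulmxA Q L' H) QL' mul0mx -(mulmxA L') HP mulmx0 !addr0.
  rewrite /M !mulmxA QV (Pg' _ V) !(gPg' _ V).
  by rewrite (PgP' _ (V *m g *m g)) (ggP' _ V).
have [_ Su] := mulmx1_unit hS.
exists S; split => //.
by rewrite -mulmxA hQS mulmxA mulVmx // mul1mx.
Qed.


Lemma colsp (R : idomainType) n (M N : 'M[R]_n) :
  same_colspace M N -> exists X, M = N *m X.
Proof.
move=> h.
have hc : forall j, exists x : 'cV_n, col j M == N *m x.
  move=> j; have [x ->] : colspace N (col j M).
    by apply/h; exists (delta_mx j 0); rewrite colE.
  by exists x.
exists (\matrix_(i, j) xchoose (hc j) i 0); apply/matrixP => i j.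
have := xchooseP (hc j) => /eqP /(congr1 (fun v : 'cV_n => v i 0)).
rewrite !mxE => ->; apply: eq_bigr => l _; by rewrite !mxE.
Qed.

Theorem theorem2p4 (R : idomainType) (hR : bezout_domain R) (n : nat)
  (A B C : 'M[R]_n) :
  A *m B *m A = A *m C *m A ->
  same_colspace (A *m B) (A *m B *m A) ->
  same_colspace (C *m A) (C *m A *m B) ->
  similar_mx (A *m B) (C *m A).
Proof.
move=> hABA hc1 hc2.
case: n A B C hABA hc1 hc2 => [|n] A B C hABA hc1 hc2.
  exists 1%:M; split; first exact: unitmx1.
  by rewrite [LHS]flatmx0 [RHS]flatmx0.
have [X hX] := colsp hc1.
have [Y hY] := colsp hc2.
have hABA' : forall q (X0 : 'M_(q, n.+1)), X0 *m A *m B *m A = X0 *m A *m C *m A.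
  by mkpre hABA.
have hPZ : A *m B = A *m B *m (A *m B) *m (Y *m X).
  by rewrite {1}hX hABA -(mulmxA A C A) {1}hY !mulmxA -hABA.
have hQW : C *m A = C *m A *m (C *m A) *m (B *m (Y *m X) *m Y).
  by rewrite {1}hY -(mulmxA C A B) {1}hPZ !mulmxA (hABA' _ C).
have [g [Pg [gPg PgP]]] := group_inv hPZ.
have [k [Qk [kQk QkQ]]] := group_inv hQW.
refine (@core _ hR _ A (C *m A *m B) _ _ g k _ _ _ _ _ Pg gPg PgP Qk kQk QkQ).
- by rewrite hABA mulmxA.
- by rewrite !mulmxA -hABA.
- by rewrite !mulmxA (hABA' _ C).
- by rewrite !mulmxA (hABA' _ C).
- by rewrite mulmxA QkQ.
Qed.
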